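(* Let $\mathbf{M}=(m_{i,j})$ be a $k\times n$ binary matrix satisfying (P1) and (P3). Suppose columns $j_{\max}$ and $j_{\min}$ of $\mathbf{M}$ have, respectively, the maximum and the minimum column weight among all columns of $\mathbf{M}$, and that these two weights differ by at least $2$. Then there exists a row $i_s\in[k]$ with $m_{i_s,j_{\max}}=1$ and $m_{i_s,j_{\min}}=0$ such that the matrix obtained from $\mathbf{M}$ by setting $m_{i_s,j_{\max}}:=0$ and $m_{i_s,j_{\min}}:=1$ still satisfies (P1) and (P3).
   Context: $[n]=\{1,\dots,n\}$. Weight means Hamming weight (number of ones). For a $k\times n$ binary matrix with row supports $R_i=\{j\in[n]: m_{i,j}=1\}$, property (P1) is: each row has weight $n-k+1$; property (P3) is: $\big|\bigcup_{i\in I}R_i\big|\ge n-k+|I|$ for every nonempty $I\subseteq[k]$. (In the paper this is stated as: in every iteration of Algorithm 1, which starts from a matrix satisfying (P1) and (P3) and repeatedly performs such swaps between a maximum-weight and a minimum-weight column while the maximum and minimum column weights differ by at least 2, such a row can always be found.) *)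

(* Defs.v *)
From mathcomp Require Import all_boot all_algebra.
Set Implicit Arguments. Unset Strict Implicit. Unset Printing Implicit Defensive.

Definition row_supp (k n : nat) (M : 'M[bool]_(k, n)) (i : 'I_k) : {set 'I_n} :=
  [set j | M i j].

Definition col_weight (k n : nat) (M : 'M[bool]_(k, n)) (j : 'I_n) : nat :=
  #|[set i | M i j]|.

(* (P1): every row has weight n - k + 1 (integer arithmetic, stated without
   subtraction as |R_i| + k = n + 1). *)
Definition P1 (k n : nat) (M : 'M[bool]_(k, n)) : Prop :=
  forall i : 'I_k, #|row_supp M i| + k = n + 1.

(* (P3): |U_{i in I} R_i| >= n - k + |I| for every nonempty I, stated as
   n + |I| <= |U R_i| + k. *)
Definition P3 (k n : nat) (M : 'M[bool]_(k, n)) : Prop :=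
  forall I : {set 'I_k}, I != set0 ->
    n + #|I| <= #|\bigcup_(i in I) row_supp M i| + k.

Definition swap_entries (k n : nat) (M : 'M[bool]_(k, n)) (s : 'I_k)
    (jmax jmin : 'I_n) : 'M[bool]_(k, n) :=
  \matrix_(i, j)
    if i == s then (if j == jmax then false else if j == jmin then true else M i j)
    else M i j.

(* Main.v *)
Require Import Defs.
From mathcomp Require Import all_boot all_algebra.
From mathcomp Require Import zify.
Set Implicit Arguments. Unset Strict Implicit.
Set Warnings "-notation-overridden,-ambiguous-paths".


Section L.
Variables (k n : nat) (M : 'M[bool]_(k, n)) (jmax jmin : 'I_n).
Implicit Types (I : {set 'I_k}) (i : 'I_k) (j : 'I_n).

Definition cov (N : 'M[bool]_(k,n)) (I : {set 'I_k}) := \bigcup_(i in I) row_supp N i.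

Lemma mem_cov (N : 'M[bool]_(k,n)) (I : {set 'I_k}) (j : 'I_n) : reflect (exists2 i, i \in I & N i j) (j \in cov N I).
Proof.
apply: (iffP bigcupP).
- by move=> [i Hi]; rewrite inE => Hj; exists i.
- by move=> [i Hi Hj]; exists i; rewrite ?inE.
Qed.

Lemma swapE s i j : swap_entries M s jmax jmin i j =
  if i == s then (if j == jmax then false else if j == jmin then true else M i j)
  else M i j.
Proof. by rewrite /swap_entries mxE. Qed.

Section S.
Variable s : 'I_k.
Hypotheses (Hs1 : M s jmax) (Hs0 : M s jmin = false).
Local Notation M' := (swap_entries M s jmax jmin).

Lemma jneq : jmax != jmin.
Proof. by apply/eqP => E; move: Hs1; rewrite E Hs0. Qed.

Lemma cov_sub I : cov M I \subset jmax |: cov M' I.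
Proof.
apply/subsetP => j /mem_cov [i Hi Hij]; rewrite !inE.
case: (eqVneq j jmax) => //= Hj; apply/mem_cov; exists i => //.
by rewrite swapE (negbTE Hj); case: (i == s); case: (j == jmin).
Qed.

Lemma cov_sub_ns I : s \notin I -> cov M I \subset cov M' I.
Proof.
move=> Hns; apply/subsetP => j /mem_cov [i Hi Hij]; apply/mem_cov; exists i => //.
have Hne : i != s by apply/eqP => E; rewrite -E Hi in Hns.
by rewrite swapE (negbTE Hne).
Qed.

Lemma cov_sub_jmax I : jmax \in cov M' I -> cov M I \subset cov M' I.
Proof.
move=> Hj; apply/subsetP => j /(subsetP (cov_sub I)); rewrite in_setU1.
by case/orP => // /eqP ->.
Qed.

Lemma jmax_cov I i : i \in I -> i != s -> M i jmax -> jmax \in cov M' I.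
Proof. by move=> Hi Hne Hm; apply/mem_cov; exists i; rewrite // swapE (negbTE Hne). Qed.

Lemma cov_sub3 I : s \in I -> jmin \notin cov M I ->
  jmin |: cov M I \subset jmax |: cov M' I.
Proof.
move=> HsI Hn; apply/subsetP => j; rewrite in_setU1; case/orP.
- move/eqP => ->; rewrite in_setU1; apply/orP; right; apply/mem_cov; exists s => //.
  by rewrite swapE eqxx eq_sym (negbTE jneq) eqxx.
- by move/(subsetP (cov_sub I)).
Qed.

Lemma bad_facts I : P3 M -> I != set0 -> ~~ (n + #|I| <= #|cov M' I| + k) ->
  [/\ s \in I, #|cov M I| + k <= n + #|I|,
      (forall i, i \in I -> M i jmax -> i = s) & exists2 b, b \in I & M b jmin].
Proof.
move=> HP3 HI Hbad.
have H3 : n + #|I| <= #|cov M I| + k := HP3 I HI.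
rewrite -ltnNge in Hbad.
have Hc : #|cov M I| <= (#|cov M' I|).+1.
  have := subset_leq_card (cov_sub I); rewrite cardsU1.
  have := leq_b1 (jmax \notin cov M' I); lia.
have HsI : s \in I.
  apply/negPn/negP => Hns; have := subset_leq_card (cov_sub_ns Hns); lia.
split => //.
- lia.
- move=> i Hi Hij; apply/eqP/negPn/negP => Hne.
  have := subset_leq_card (cov_sub_jmax (jmax_cov Hi Hne Hij)); lia.
- have : jmin \in cov M I.
    apply/negPn/negP => Hn; have := subset_leq_card (cov_sub3 HsI Hn).
    rewrite !cardsU1 Hn /=.
    case: (jmax \notin cov M' I) => /= H; move: H Hbad H3; rewrite ?add1n ?add0n; set a := #|cov M I|; set b := #|cov M' I|; lia.
  by case/mem_cov => b Hb Hbj; exists b.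
Qed.

Lemma swap_P1 : P1 M -> P1 M'.
Proof.
move=> HP1 i; case: (eqVneq i s) => [->|Hi].
- have E1 : row_supp M' s = jmin |: (row_supp M s :\ jmax).
    apply/setP => j; rewrite !inE swapE eqxx.
    case: (eqVneq j jmax) => [->|Hj] /=.
      by rewrite (negbTE jneq).
    by case: (j == jmin).
  have C1 : #|row_supp M' s| = (#|row_supp M s :\ jmax|).+1.
    by rewrite E1 cardsU1 !inE Hs0 andbF.
  have C2 : #|row_supp M s| = (#|row_supp M s :\ jmax|).+1.
    by rewrite (cardsD1 jmax) inE Hs1.
  by rewrite C1 -C2.
- have -> : row_supp M' i = row_supp M i.
    by apply/setP => j; rewrite !inE swapE (negbTE Hi).
  exact: HP1.
Qed.

End S.
Definition badI (s : 'I_k) I :=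
  (I != set0) && ~~ (n + #|I| <= #|cov (swap_entries M s jmax jmin) I| + k).

Lemma key s t I J b : M s jmax -> M s jmin = false -> M t jmax -> M t jmin = false ->
  P3 M -> badI s I -> b \in I -> badI t J -> b \in J -> s = t.
Proof.
move=> Hs1 Hs0 Ht1 Ht0 HP3 /andP [HI HbI] HbinI /andP [HJ HbJ] HbinJ.
apply/eqP/negPn/negP => Hst.
case: (bad_facts Hs1 Hs0 HP3 HI HbI) => HsI HcI HmI _.
case: (bad_facts Ht1 Ht0 HP3 HJ HbJ) => HtJ HcJ HmJ _.
have HX : I :|: J != set0 by apply/set0Pn; exists b; rewrite inE HbinI.
have HZ : I :&: J != set0 by apply/set0Pn; exists b; rewrite inE HbinI HbinJ.
have H3X : n + #|I :|: J| <= #|cov M (I :|: J)| + k := HP3 _ HX.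
have H3Z : n + #|I :&: J| <= #|cov M (I :&: J)| + k := HP3 _ HZ.
have covX : cov M (I :|: J) = cov M I :|: cov M J by rewrite /cov bigcup_setU.
have HsubZ : jmax |: cov M (I :&: J) \subset cov M I :&: cov M J.
  apply/subsetP => j; rewrite in_setU1 => /orP [/eqP -> | /mem_cov [i]].
  - by rewrite inE; apply/andP; split; apply/mem_cov; [exists s | exists t].
  - rewrite inE => /andP [HiI HiJ] Hij.
    by rewrite inE; apply/andP; split; apply/mem_cov; exists i.
have HnZ : jmax \notin cov M (I :&: J).
  apply/negP => /mem_cov [i]; rewrite inE => /andP [HiI HiJ] Hij.
  move: (HmI i HiI Hij) (HmJ i HiJ Hij) => E1 E2.
  by move: Hst; rewrite -E1 -E2 eqxx.
have := subset_leq_card HsubZ; rewrite cardsU1 HnZ /=.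
have := cardsUI (cov M I) (cov M J). have := cardsUI I J.
rewrite -covX.
move=> E1 E2 E3; move: E1 E2 E3 H3X H3Z HcI HcJ.
move: #|I :|: J| #|I :&: J| #|I| #|J| #|cov M (I :|: J)| #|cov M I :&: cov M J| #|cov M I| #|cov M J| #|cov M (I :&: J)|.
clear; move=> *; lia.
Qed.

End L.

Theorem lemma7 (k n : nat) (M : 'M[bool]_(k, n)) (jmax jmin : 'I_n) :
  P1 M -> P3 M ->
  (forall j : 'I_n, col_weight M j <= col_weight M jmax) ->
  (forall j : 'I_n, col_weight M jmin <= col_weight M j) ->
  col_weight M jmin + 2 <= col_weight M jmax ->
  exists s : 'I_k,
    [/\ M s jmax = true, M s jmin = false,
        P1 (swap_entries M s jmax jmin) & P3 (swap_entries M s jmax jmin)].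
Proof.
move=> HP1 HP3 _ _ Hdiff.
pose X := [set i | M i jmax]; pose Y := [set i | M i jmin].
pose A := X :\: Y; pose B := Y :\: X.
have HAB : #|B| + 2 <= #|A|.
  have := cardsID Y X; have := cardsID X Y; rewrite setIC.
  move: Hdiff; rewrite /col_weight -/X -/Y.
  rewrite /A /B; move: #|Y :&: X| #|X :\: Y| #|Y :\: X| #|X| #|Y|.
  clear; move=> *; lia.
pose bad s := [exists I, badI M jmax jmin s I].
pose R s b := [exists I, badI M jmax jmin s I && (b \in I) && M b jmin].
pose f s := odflt s [pick b | R s b].
pose BadA := [set s in A | bad s].
have HA : forall s, s \in A -> M s jmax /\ M s jmin = false.
  by move=> s; rewrite !inE => /andP [/negbTE -> ->].
have Hf : forall s, s \in BadA -> R s (f s) /\ f s \in B.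
  move=> s; rewrite inE => /andP [HsA /existsP [I HbI]].
  case: (HA s HsA) => Hs1 Hs0.
  have [b Hb] : exists b, R s b.
    move: (HbI) => /andP [HI HbI'].
    case: (bad_facts Hs1 Hs0 HP3 HI HbI') => _ _ _ [b Hb Hbj].
    by exists b; apply/existsP; exists I; rewrite HbI Hb Hbj.
  rewrite /f; case: pickP => [b' Hb'|Hn]; last by rewrite Hn in Hb.
  split => //=.
  case/existsP: Hb' => I' /andP [/andP [HbI2 Hb'I] Hb'j].
  move: (HbI2) => /andP [HI2 HbI2'].
  case: (bad_facts Hs1 Hs0 HP3 HI2 HbI2') => _ _ Hm _.
  rewrite !inE Hb'j andbT; apply/negP => Hb'm.
  by move: Hs0; rewrite -(Hm _ Hb'I Hb'm) Hb'j.
have Hinj : {in BadA &, injective f}.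
  move=> s t Hs Ht Est.
  case: (Hf s Hs) => /existsP [I /andP [/andP [HI HbI] _]] _.
  case: (Hf t Ht) => /existsP [J /andP [/andP [HJ HbJ] _]] _.
  have HsA : s \in A by move: Hs; rewrite inE => /andP [].
  have HtA : t \in A by move: Ht; rewrite inE => /andP [].
  case: (HA s HsA) => Hs1 Hs0; case: (HA t HtA) => Ht1 Ht0.
  apply: (key Hs1 Hs0 Ht1 Ht0 HP3 HI HbI HJ); by rewrite Est.
have Hcard : #|BadA| <= #|B|.
  rewrite -(card_in_imset Hinj); apply: subset_leq_card.
  apply/subsetP => b /imsetP [s Hs ->]; by case: (Hf s Hs).
have : ~~ (A \subset BadA).
  apply/negP => Hsub; have := subset_leq_card Hsub; move: Hcard HAB.
  move: #|A| #|B| #|BadA|; clear; move=> *; lia.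
case/subsetPn => s HsA HsB.
case: (HA s HsA) => Hs1 Hs0.
have Hnb : ~~ bad s by move: HsB; rewrite inE HsA.
exists s; split => //; first exact: swap_P1.
move=> I HI; apply/negPn/negP => Hn; move/negP: Hnb; apply.
by apply/existsP; exists I; rewrite /badI HI Hn.
Qed.
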